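(* Let $a_1,\dots,a_n>0$, $B>0$, and $\tilde{x}\in\mathbb{R}^n$ with $\sum_j a_j\tilde{x}_j\neq0$. Then $\pi_{\mathrm{PoS}}(\tilde{x})$ is an optimal solution of $$\min_{v\in\Delta_n}\ \frac{B}{2}\big\|v-P^F(\tilde{x})\big\|_1. \qquad (\ast)$$ Moreover, if $\sum_{j=1}^na_j\tilde{x}_j>0$, then $\pi_{\mathrm{BL}}(\tilde{x})$ is also an optimal solution of $(\ast)$.
   Context: $\Delta_n=\{v\in\mathbb{R}^n:v\ge0,\ \sum_iv_i=1\}$. For $y$ with $\sum_ja_jy_j\ne0$, $P^F(y)_i=\frac{a_iy_i}{\sum_{j=1}^na_jy_j}$. The projection-onto-simplex mechanism is $\pi_{\mathrm{PoS}}(\tilde{x})=\arg\min_{v\in\Delta_n}\|v-P^F(\tilde{x})\|_2$. The baseline mechanism is $\pi_{\mathrm{BL}}(\tilde{x})_i=\frac{a_i(\tilde{x}_i)_+}{\sum_{j=1}^na_j(\tilde{x}_j)_+}$, where $(y)_+=\max\{y,0\}$ (well-defined when some $\tilde{x}_j>0$, in particular when $\sum_ja_j\tilde{x}_j>0$). *)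

(* Defs.v *)
From HB Require Import structures.
From mathcomp Require Import all_boot all_order all_algebra.
From mathcomp Require Import reals.
Set Implicit Arguments. Unset Strict Implicit. Unset Printing Implicit Defensive.
Import Order.TTheory GRing.Theory Num.Theory.
Local Open Scope ring_scope.

Section Defs.
Variable R : realType.
Variable n : nat.

Definition in_simplex (v : 'I_n -> R) : Prop :=
  (forall i, 0 <= v i) /\ \sum_(i < n) v i = 1.

Definition PF (a y : 'I_n -> R) : 'I_n -> R :=
  fun i => a i * y i / \sum_(j < n) a j * y j.

Definition l2dist (v w : 'I_n -> R) : R :=
  Num.sqrt (\sum_(i < n) (v i - w i) ^+ 2).

Definition l1dist (v w : 'I_n -> R) : R :=
  \sum_(i < n) `|v i - w i|.

(* v is a (the) projection of P^F(x) onto Delta_n : v = pi_PoS(x) *)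
Definition is_PoS (a x v : 'I_n -> R) : Prop :=
  in_simplex v /\ forall w, in_simplex w -> l2dist v (PF a x) <= l2dist w (PF a x).

Definition piBL (a x : 'I_n -> R) : 'I_n -> R :=
  fun i => a i * Num.max (x i) 0 / \sum_(j < n) a j * Num.max (x j) 0.

Definition l1_optimal (B : R) (a x v : 'I_n -> R) : Prop :=
  in_simplex v /\
  forall w, in_simplex w -> B / 2 * l1dist v (PF a x) <= B / 2 * l1dist w (PF a x).

End Defs.

(* Main.v *)
Require Import Defs.
From HB Require Import structures.
From mathcomp Require Import all_boot all_order all_algebra.
From mathcomp Require Import reals.
From mathcomp Require Import classical_sets.
From mathcomp Require Import ring lra.
Import Order.TTheory GRing.Theory Num.Theory.
Local Open Scope ring_scope.

Section Aux.
Variable R : realType.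
Variable n : nat.
Variable p : 'I_n -> R.
Hypothesis hp : \sum_(i < n) p i = 1.

Definition fl (t : R) := \sum_(i < n) Num.max (p i - t) 0.

Lemma maxpt (q s t : R) : s <= t -> Num.max (q - s) 0 <= Num.max (q - t) 0 + (t - s).
Proof.
move=> st.
have h1 : q - t <= Num.max (q - t) 0 by rewrite le_max lexx.
have h2 : 0 <= Num.max (q - t) 0 by rewrite le_max lexx orbT.
rewrite ge_max; apply/andP; split; lra.
Qed.

Lemma maxmono (q s t : R) : s <= t -> Num.max (q - t) 0 <= Num.max (q - s) 0.
Proof.
move=> st.
have h1 : q - s <= Num.max (q - s) 0 by rewrite le_max lexx.
have h2 : 0 <= Num.max (q - s) 0 by rewrite le_max lexx orbT.
rewrite ge_max; apply/andP; split; lra.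
Qed.

Lemma fl_lip s t : s <= t -> fl s <= fl t + n%:R * (t - s).
Proof.
move=> st; rewrite /fl.
have -> : n%:R * (t - s) = \sum_(i < n) (t - s).
  by rewrite sumr_const card_ord mulr_natl.
rewrite -big_split /=; apply: ler_sum => i _; exact: maxpt.
Qed.

Lemma fl_mono s t : s <= t -> fl t <= fl s.
Proof. by move=> st; apply: ler_sum => i _; exact: maxmono. Qed.

Lemma fl_ge0 t : 0 <= fl t.
Proof. by apply: sumr_ge0 => i _; rewrite le_max lexx orbT. Qed.

Lemma p_le_sum i : p i <= \sum_(j < n) `|p j|.
Proof.
rewrite (bigD1 i) //=.
have : 0 <= \sum_(j < n | j != i) `|p j| by apply: sumr_ge0.
have := ler_norm (p i); lra.
Qed.

Lemma tau_exists : exists t, 0 <= t /\ fl t = 1.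
Proof.
pose E : set R := fun t => 0 <= t /\ 1 <= fl t.
have E0 : E 0.
  split => //; rewrite -hp; apply: ler_sum => i _; rewrite le_max subr0 lexx //.
set M := \sum_(j < n) `|p j|.
have ub : forall t, E t -> t <= M.
  move=> t [t0 ft]; rewrite leNgt; apply/negP => Mt.
  suff : fl t = 0 by move=> h; move: ft; rewrite h; lra.
  apply: big1 => i _; apply: max_r.
  have := p_le_sum i; rewrite -/M; lra.
have hs : has_sup E by split; [exists 0 | exists M => t /ub].
set tau := sup E.
have tub : forall t, E t -> t <= tau by move=> t Et; exact: sup_upper_bound.
have tau0 : 0 <= tau by exact: tub.
set N : R := n%:R + 1.
have n0 : 0 <= n%:R :> R by [].
have N0 : 0 < N by rewrite /N; lra.
exists tau; split => //.
apply/eqP; rewrite eq_le; apply/andP; split.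
- rewrite leNgt; apply/negP => hlt.
  set d := fl tau - 1.
  have d0 : 0 < d by rewrite /d; lra.
  pose t := tau + d / N.
  have dN0 : 0 < d / N by exact: divr_gt0.
  have eq1 : N * (d / N) = d by rewrite mulrCA divff ?mulr1 // gt_eqF.
  have Et : E t.
    split; first by rewrite /t; lra.
    have le : tau <= t by rewrite /t; lra.
    have h := fl_lip _ _ le.
    have e2 : t - tau = d / N by rewrite /t; ring.
    rewrite e2 in h.
    have : n%:R * (d / N) <= N * (d / N) by rewrite ler_wpM2r ?ltW // /N; lra.
    rewrite eq1; move: h; rewrite /d; lra.
  have := tub _ Et; rewrite /t; lra.
- rewrite leNgt; apply/negP => hlt.
  set d := 1 - fl tau.
  have d0 : 0 < d by rewrite /d; lra.
  have dN0 : 0 < d / N by exact: divr_gt0.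
  have eq1 : N * (d / N) = d by rewrite mulrCA divff ?mulr1 // gt_eqF.
  have [t Et tt] := sup_adherent dN0 hs; rewrite -/tau in tt.
  have tt2 := tub _ Et.
  have h := fl_lip _ _ tt2.
  have : n%:R * (tau - t) <= n%:R * (d / N) by rewrite ler_wpM2l //; lra.
  have : n%:R * (d / N) + d / N = d by rewrite -[RHS]eq1 /N; ring.
  case: Et => _ ft.
  have dd : d = 1 - fl tau by [].
  move: h; lra.
Qed.


Definition vt (tau : R) : 'I_n -> R := fun i => Num.max (p i - tau) 0.

Lemma vt_simplex tau : fl tau = 1 -> in_simplex (vt tau).
Proof. by move=> h; split => [i|]; rewrite ?le_max ?lexx ?orbT. Qed.

Lemma vt_le tau i : 0 <= tau -> vt tau i <= Num.max (p i) 0.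
Proof.
move=> t0; rewrite /vt ge_max; apply/andP; split; rewrite le_max.
  by apply/orP; left; lra.
by rewrite lexx orbT.
Qed.

Lemma key tau w : fl tau = 1 -> in_simplex w ->
  \sum_(i < n) (vt tau i - p i) ^+ 2 + \sum_(i < n) (w i - vt tau i) ^+ 2
  <= \sum_(i < n) (w i - p i) ^+ 2.
Proof.
move=> hf [w0 w1].
set v := vt tau.
have hv : \sum_(i < n) v i = 1 by [].
have h : 0 <= \sum_(i < n) ((((w i - p i) ^+ 2 - (v i - p i) ^+ 2) - (w i - v i) ^+ 2)
             + 2 * tau * (w i - v i)).
  apply: sumr_ge0 => i _.
  have -> : ((w i - p i) ^+ 2 - (v i - p i) ^+ 2) - (w i - v i) ^+ 2 + 2 * tau * (w i - v i)
     = 2 * (w i - v i) * (v i - p i + tau) by ring.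
  rewrite /v /vt /=; case: (lerP 0 (p i - tau)) => hh.
    by rewrite (_ : p i - tau - p i + tau = 0) ?mulr0 //; ring.
  apply: mulr_ge0; last by lra.
  by rewrite subr0 mulr_ge0 ?w0.
move: h; rewrite big_split /= !sumrB -mulr_sumr sumrB w1 hv; lra.
Qed.

Lemma l1_lemma v w : in_simplex v -> (forall i, v i <= Num.max (p i) 0) -> in_simplex w ->
  \sum_(i < n) `|v i - p i| <= \sum_(i < n) `|w i - p i|.
Proof.
move=> [v0 v1] vle [w0 w1].
pose g i := Num.max (p i) 0 + Num.max (- p i) 0.
have e1 : \sum_(i < n) `|v i - p i| = \sum_(i < n) (g i - v i).
  apply: eq_bigr => i _; rewrite /g; have := vle i; have := v0 i.
  case: (lerP 0 (p i)) => hh.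
    rewrite (@max_r _ _ (- p i)); last by lra.
    move=> a b.
    by rewrite ler0_norm ?addr0; [ring | lra].
  rewrite (@max_l _ _ (- p i)); last by lra.
  move=> a b.
  by rewrite ger0_norm; [lra | lra].
have e2 : \sum_(i < n) (g i - w i) <= \sum_(i < n) `|w i - p i|.
  apply: ler_sum => i _; rewrite /g; have := w0 i.
  case: (lerP 0 (p i)) => hh.
    rewrite (@max_r _ _ (- p i)); last by lra.
    move=> a.
    rewrite addr0 ler_normr; apply/orP; right; lra.
  rewrite (@max_l _ _ (- p i)); last by lra.
  move=> a.
  rewrite ler_normr; apply/orP; left; lra.
rewrite e1; apply: le_trans e2; rewrite !sumrB v1 w1 lexx //.
Qed.

End Aux.

Lemma sum_frac (R : realType) (n : nat) (f : 'I_n -> R) :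
  \sum_(j < n) f j != 0 -> \sum_(i < n) (f i / \sum_(j < n) f j) = 1.
Proof. by move=> h; rewrite -mulr_suml divff. Qed.

Theorem theorem3 (R : realType) (n : nat) (a : 'I_n -> R) (B : R) (x : 'I_n -> R)
  (ha : forall i, 0 < a i) (hB : 0 < B)
  (hx : \sum_(j < n) a j * x j != 0) :
  (exists v, is_PoS a x v) /\
  (forall v, is_PoS a x v -> l1_optimal B a x v) /\
  (0 < \sum_(j < n) a j * x j -> l1_optimal B a x (piBL a x)).
Proof.
set p := PF a x.
have hp : \sum_(i < n) p i = 1 by exact: (@sum_frac R n (fun j => a j * x j) hx).
have [tau [tau0 ftau]] := tau_exists _ _ _ hp.
set v := vt R n p tau.
have vs : in_simplex v by exact: vt_simplex.
have B2 : 0 <= B / 2 by apply: divr_ge0; lra.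
have sq0 : forall u : 'I_n -> R, 0 <= \sum_(i < n) (u i - p i) ^+ 2.
  by move=> u; apply: sumr_ge0 => i _; exact: sqr_ge0.
have vPoS : is_PoS a x v.
  split => // w ws; rewrite /l2dist -/p ler_sqrt //.
  have := key _ _ _ _ _ ftau ws; rewrite -/v.
  have : 0 <= \sum_(i < n) (w i - v i) ^+ 2 by apply: sumr_ge0 => i _; exact: sqr_ge0.
  lra.
have l1opt : forall u, in_simplex u -> (forall i, u i <= Num.max (p i) 0) -> l1_optimal B a x u.
  move=> u us ule; split => // w ws; apply: ler_wpM2l => //.
  exact: l1_lemma.
split; first by exists v.
split.
  move=> v' [v's v'min]; apply: l1opt => // i.
  have h1 := v'min v vs; move: h1; rewrite /l2dist -/p ler_sqrt // => h1.
  have h2 := key _ _ _ _ _ ftau v's; rewrite -/v in h2.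
  have hs : \sum_(i < n) (v' i - v i) ^+ 2 == 0.
    rewrite eq_le sumr_ge0 ?andbT; last by move=> j _; exact: sqr_ge0.
    lra.
  move: hs; rewrite psumr_eq0; last by move=> j _; exact: sqr_ge0.
  move=> /allP /(_ i (mem_index_enum _)) /=; rewrite sqrf_eq0 subr_eq0 => /eqP ->.
  exact: vt_le.
move=> Spos.
set Sp := \sum_(j < n) a j * Num.max (x j) 0.
have SSp : \sum_(j < n) a j * x j <= Sp.
  apply: ler_sum => i _; apply: ler_wpM2l; first exact: ltW.
  by rewrite le_max lexx.
have Sp0 : 0 < Sp by apply: lt_le_trans SSp.
apply: l1opt.
  split.
    move=> i; rewrite /piBL -/Sp; apply: divr_ge0; last exact: ltW.
    by apply: mulr_ge0; [exact: ltW | rewrite le_max lexx orbT].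
  rewrite /piBL -/Sp; exact (@sum_frac R n (fun j => a j * Num.max (x j) 0) (lt0r_neq0 Sp0)).
move=> i; rewrite /piBL -/Sp /p /PF.
case: (lerP 0 (x i)) => hxi.
  rewrite le_max; apply/orP; left.
  apply: ler_wpM2l.
    by apply: mulr_ge0; [exact: ltW | lra].
  by rewrite lef_pV2 ?posrE.
by rewrite mulr0 mul0r le_max lexx orbT.
Qed.
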